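(* Let $K/F$ be any quadratic field extension (of any characteristic, separable or not). An element $n\in F$ is a norm from $K$ (i.e. $n=\mathrm{N}_{K/F}(\alpha)$ for some $\alpha\in K$) if and only if $n=-\det[X,Y]$ for some $X,Y\in\mathbb{M}_2(F)$ such that $K$ is the splitting field over $F$ of the characteristic polynomial of $X$.
   Context: $[X,Y]=XY-YX$. *)

(* Defs.v *)
From HB Require Import structures.
From mathcomp Require Import all_boot all_order all_algebra all_field.
Set Implicit Arguments. Unset Strict Implicit. Unset Printing Implicit Defensive.
Import GRing.Theory.
Local Open Scope ring_scope.

Definition commmx (R : comNzRingType) (n : nat) (X Y : 'M[R]_n) : 'M[R]_n :=
  X *m Y - Y *m X.

(* The norm N_{K/F}(a): determinant of the F-linear map x |-> x * a on K,
   computed in the (canonical) basis vbasis {:K}; independent of the basis. *)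
Definition normK (F : fieldType) (K : fieldExtType F) (a : K) : F :=
  \det (passmx.mxof (vbasis {:K}) (vbasis {:K}) (amulr a)).

(* Main.v *)
Require Import Defs.
From HB Require Import structures.
From mathcomp Require Import all_boot all_order all_algebra all_field.
From Stdlib Require Import Ring.
Import GRing.Theory.
Local Open Scope ring_scope.

Lemma det2 (R : comNzRingType) (A : 'M[R]_2) : \det A = A 0 0 * A 1 1 - A 0 1 * A 1 0.
Proof.
rewrite (expand_det_row _ 0) !big_ord_recl big_ord0 /cofactor !det_mx11 !mxE /=.
rewrite addr0 expr0 mul1r expr1 mulN1r mulrN.
have -> : lift (0 : 'I_2) 0 = 1 by apply/val_inj.
by have -> : lift (1 : 'I_2) (0 : 'I_1) = 0 by apply/val_inj.
Qed.

Lemma mulmx2E (R : comNzRingType) (A B : 'M[R]_2) i j : (A *m B) i j = A i 0 * B 0 j + A i 1 * B 1 j.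
Proof.
rewrite mxE !big_ord_recl big_ord0 addr0 /=.
by have -> : lift (0 : 'I_2) 0 = 1 by apply/val_inj.
Qed.

Definition mx2 {R : Type} (a b c d : R) : 'M[R]_2 :=
  \matrix_(i < 2, j < 2) if i == 0 then (if j == 0 then a else b) else (if j == 0 then c else d).

Section RingTac.
Variable R : comNzRingType.
Definition rT := GRing.ComNzRing.sort R.
Definition radd (x y : rT) : rT := x + y.
Definition rmul (x y : rT) : rT := x * y.
Definition ropp (x : rT) : rT := - x.
Definition rsub (x y : rT) : rT := x - y.
Definition r0 : rT := 0.
Definition r1 : rT := 1.
Lemma RT : @ring_theory rT r0 r1 radd rmul rsub ropp eq.
Proof. rewrite /rT /r0 /r1 /radd /rmul /rsub /ropp. split=> //=; [exact: add0r|exact: addrC|exact: addrA|exact: mul1r|exact: mulrC|exact: mulrA|exact: mulrDl|exact: subrr]. Qed.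
Add Ring Rr : RT.
Ltac rr := match goal with |- @eq _ ?a ?b => change (@eq rT a b) end; rewrite -?[(_ - _)]/(rsub _ _) -?[(_ + _)]/(radd _ _) -?[(_ * _)]/(rmul _ _) -?[(- _)]/(ropp _) -?[0]/r0 -?[1]/r1; ring.
Lemma cp_id (X a b c d : rT) : rsub (rmul (rsub X a) (rsub X d)) (rmul (ropp b) (ropp c)) = radd (rsub (rmul X X) (rmul (radd a d) X)) (rsub (rmul a d) (rmul b c)).
Proof. ring. Qed.
Lemma nid (x y t p : rT) : rsub (rmul (radd (rmul y (radd t (rmul p (ropp r0)))) x) x) (rmul (rmul y (rmul p (ropp r1))) y) = radd (radd (rmul x x) (rmul (rmul t x) y)) (rmul (rmul p y) y).
Proof. ring. Qed.
Lemma commdet (X Y : 'M[R]_2) : - \det (commmx X Y) =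
  let a := X 0 0 in let b := X 0 1 in let c := X 1 0 in let d := X 1 1 in
  let e := Y 0 0 in let f := Y 0 1 in let g := Y 1 0 in let h := Y 1 1 in
  - ((a*e + b*g - (e*a + f*c)) * (c*f + d*h - (g*b + h*d)) - (a*f + b*h - (e*b + f*d)) * (c*e + d*g - (g*a + h*c))).
Proof.
have E : forall (A B : 'M[R]_2) i j, (A - B) i j = A i j - B i j by move=> *; rewrite !mxE.
by rewrite det2 /commmx !E !mulmx2E.
Qed.

Lemma fwd (t p x y : R) : - \det (commmx (mx2 0 (-p) 1 t) (mx2 (-y) x 0 0)) = x*x + t*x*y + p*y*y.
Proof. rewrite commdet /= !mxE /=. rr. Qed.

Lemma bwd (X Y : 'M[R]_2) (x y : R) :
  let a := X 0 0 in let b := X 0 1 in let c := X 1 0 in let d := X 1 1 in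
  let e := Y 0 0 in let f := Y 0 1 in let g := Y 1 0 in let h := Y 1 1 in
  c*(e*a+f*c-a*h-b*g) + g*a*(d-a) = x * c ->
  -(c*(e-h) + g*(d-a)) = y * c ->
  c * c * (- \det (commmx X Y)) = c * c * (x*x + (a+d)*x*y + (a*d-b*c)*y*y).
Proof.
rewrite commdet /= => hx hy.
have -> : X 1 0 * X 1 0 * (x * x + (X 0 0 + X 1 1) * x * y + (X 0 0 * X 1 1 - X 0 1 * X 1 0) * y * y) =
  (x * X 1 0) * (x * X 1 0) + (X 0 0 + X 1 1) * (x * X 1 0) * (y * X 1 0) + (X 0 0 * X 1 1 - X 0 1 * X 1 0) * (y * X 1 0) * (y * X 1 0) by rr.
rewrite -hx -hy. rr.
Qed.
Lemma quad (X u v : R) : (X - u) * (X - v) = X * X - (u + v) * X + u * v.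
Proof. rr. Qed.
Lemma lin3 (a b c : R) : a - b + c = 0 -> a = b - c.
Proof. move=> h; apply/eqP; rewrite -subr_eq0 -h; apply/eqP; rr. Qed.
Lemma fact2 (T u v : R) : T * T = (u + v) * T - u * v -> (T - u) * (T - v) = 0.
Proof. move=> h; rewrite quad h; rr. Qed.
End RingTac.

Lemma char_poly2 (R : comNzRingType) (A : 'M[R]_2) : char_poly A = 'X^2 - (A 0 0 + A 1 1) *: 'X + (A 0 0 * A 1 1 - A 0 1 * A 1 0)%:P.
Proof.
rewrite /char_poly det2 /char_poly_mx !mxE /= mulr1n mulr0n !sub0r -mul_polyC polyCD polyCB !polyCM expr2.
exact: (@cp_id _ 'X (A 0 0)%:P (A 0 1)%:P (A 1 0)%:P (A 1 1)%:P).
Qed.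

Lemma det_cast2 (R : comNzRingType) m (h : m = 2%N) (M : 'M[R]_m) :
  \det M = M (cast_ord (esym h) 0) (cast_ord (esym h) 0) * M (cast_ord (esym h) 1) (cast_ord (esym h) 1)
         - M (cast_ord (esym h) 0) (cast_ord (esym h) 1) * M (cast_ord (esym h) 1) (cast_ord (esym h) 0).
Proof. subst m; by rewrite det2 !cast_ord_id. Qed.

Section Norm.
Variables (F : fieldType) (K : fieldExtType F).

Lemma mxofE (e : (\dim {:K}).-tuple K) (f : 'End(K)) i j :
  passmx.mxof e e f i j = coord e j (f e`_i).
Proof. by rewrite /passmx.mxof mxE /= passmx.vecof_delta mxE. Qed.

Lemma amulrE (a x : K) : amulr a x = x * a.
Proof. by rewrite lfunE. Qed.

Lemma normK_basis (e : (\dim {:K}).-tuple K) (eb : basis_of fullv e) a :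
  normK a = \det (passmx.mxof e e (amulr a)).
Proof.
rewrite /normK; set b := vbasis _; have bb : basis_of fullv b := vbasisP _.
have -> : passmx.mxof e e (amulr a) =
   passmx.mxof e b \1 *m passmx.mxof b b (amulr a) *m passmx.mxof b e \1.
  by rewrite -(passmx.mxof_comp e b bb) -(passmx.mxof_comp e e bb) comp_lfun1l comp_lfun1r.
rewrite !det_mulmx mulrAC -det_mulmx -(passmx.mxof_comp e e bb) comp_lfun1l.
by rewrite passmx.mxof1 ?det1 ?mul1r // (basis_free eb).
Qed.
End Norm.
Section Basis.
Variables (F : fieldType) (K : fieldExtType F) (hK : \dim {:K} = 2%N).
Variable (th : K) (thF : th \notin 1%VS).
Let i0 : 'I_(\dim {:K}) := cast_ord (esym hK) 0.
Let i1 : 'I_(\dim {:K}) := cast_ord (esym hK) 1.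
Let e : (\dim {:K}).-tuple K := tcast (esym hK) [tuple th; 1].

Lemma e0 : e`_i0 = th. Proof. by rewrite val_tcast. Qed.
Lemma e1 : e`_i1 = 1. Proof. by rewrite val_tcast. Qed.

Lemma eb : basis_of fullv e.
Proof.
rewrite basisEfree subvf size_tuple leqnn andbT val_tcast /=.
rewrite free_cons span_seq1 thF seq1_free oner_neq0.
done.
Qed.

Lemma coord_e (j : 'I_(\dim {:K})) x y : coord e j (x *: th + y *: 1) = x * (i0 == j)%:R + y * (i1 == j)%:R.
Proof.
have := coord_free i0 j (basis_free eb); have := coord_free i1 j (basis_free eb).
rewrite e0 e1 => h1 h0; by rewrite linearD !linearZ /= h0 h1.
Qed.

Lemma i10 : (i1 == i0) = false. Proof. by []. Qed.
Lemma i01 : (i0 == i1) = false. Proof. by []. Qed.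
Lemma cth j : coord e j th = (i0 == j)%:R.
Proof. by have := coord_free i0 j (basis_free eb); rewrite e0. Qed.
Lemma c1 j : coord e j 1 = (i1 == j)%:R.
Proof. by have := coord_free i1 j (basis_free eb); rewrite e1. Qed.

Lemma normK_e t p (hth : th * th = t *: th - p *: 1) x y :
  normK (y *: th + x *: 1) = x*x + t*x*y + p*y*y.
Proof.
rewrite (@normK_basis _ _ _ eb) (@det_cast2 _ _ hK) -/i0 -/i1 !mxofE !amulrE e0 e1 !mul1r.
rewrite mulrDr -scalerAr hth mulr_algr.
rewrite !(linearD, linearB, linearZ) /= !linearN !cth !c1 !eqxx i10 i01 /= !mulr1n !mulr0n !mulr1 !mulr0 ?addr0 ?add0r.
rewrite ?c1 /= ?eqxx ?i10 ?i01 /=.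
exact: (@nid _ x y t p).
Qed.
Lemma rep a : exists x y, a = y *: th + x *: 1.
Proof.
have := span_basis eb; rewrite val_tcast /= => hs.
have : a \in <<[:: th; 1%R]>>%VS by rewrite hs memvf.
rewrite span_cons span_seq1 => /memv_addP [u /vlineP[y ->] [v /vlineP[x ->] ->]].
by exists x, y.
Qed.
End Basis.

Theorem theorem5p1 (F : fieldType) (K : fieldExtType F)
    (hK : \dim {:K} = 2%N) (n : F) :
  (exists a : K, normK a = n) <->
  (exists X Y : 'M[F]_2,
      n = - \det (commmx X Y) /\
      splittingFieldFor 1%VS (map_poly (in_alg K) (char_poly X)) {:K}).
Proof.
have memA : forall c : F, c%:A \in (1%VS : {vspace K}).
  by move=> c; rewrite memvZ // memv_line.
split.
- case=> a <-.
  have : ~~ all (fun x => x \in (1%VS : {vspace K})) (vbasis fullv).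
    apply/negP=> /allP /span_subvP; rewrite (span_basis (vbasisP _)) => /dimvS.
    by rewrite hK dimv1.
  case/allPn => th _ thF.
  have [x [y ha]] := @rep _ _ hK _ thF a.
  have [s [t hth]] := @rep _ _ hK _ thF (th * th).
  have hth' : th * th = t *: th - (- s) *: 1 by rewrite hth scaleNr opprK.
  exists (mx2 0 (- - s) 1 t), (mx2 (-y) x 0 0); split.
    by rewrite fwd ha (@normK_e _ _ hK _ thF _ _ hth').
  exists [:: th; t%:A - th].
    rewrite big_cons big_cons big_nil mulr1 quad -polyCD -polyCM [th + _]addrC subrK.
    have -> : th * (t%:A - th) = (- s)%:A.
      by rewrite mulrBr hth' mulr_algr opprB addrC subrK.
    rewrite char_poly2 !mxE /= rmorphD rmorphB /= map_polyXn map_polyZ map_polyC /= expr2.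
    rewrite -mul_polyC add0r mul0r mulr1 sub0r opprK.
    by rewrite map_polyX eqpxx.
  apply/eqP; rewrite eqEsubv subvf /=.
  have := span_basis (@eb _ _ hK _ thF); rewrite val_tcast /= => <-.
  apply/span_subvP=> z; rewrite !inE => /orP[/eqP->|/eqP->].
    by apply: seqv_sub_adjoin; rewrite mem_head.
  by apply: (subvP (subv_adjoin_seq _ _)); rewrite memv_line.
- case=> X [Y [-> [rs hrs hE]]].
  have : has (fun z => z \notin (1%VS : {vspace K})) rs.
    apply/negPn/negP => /hasPn H.
    have : (<<1 & rs>> <= 1)%VS.
      by apply/Fadjoin_seqP; split => // z /H; rewrite negbK.
    by rewrite hE => /dimvS; rewrite hK dimv1.
  case/hasP => th thrs thF.
  have : root (map_poly (in_alg K) (char_poly X)) th.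
    by rewrite (eqp_root hrs) root_prod_XsubC.
  rewrite rootE char_poly2 rmorphD rmorphB /= map_polyXn map_polyZ map_polyC map_polyX !hornerE /=.
  move/eqP/lin3; rewrite expr2 mulr_algl => hth.
  have c0 : X 1 0 != 0.
    apply/negP => /eqP c0; move: hth; rewrite c0 mulr0 subr0 => hth.
    have : (th - (X 0 0)%:A) * (th - (X 1 1)%:A) = 0.
      by apply: fact2; rewrite hth !mulrDl !mulr_algl scalerDl scalerA.
    move/eqP; rewrite mulf_eq0 !subr_eq0 => /orP[]/eqP hh; by move: thF; rewrite hh memA.
  pose x := (X 1 0 * (Y 0 0 * X 0 0 + Y 0 1 * X 1 0 - X 0 0 * Y 1 1 - X 0 1 * Y 1 0) + Y 1 0 * X 0 0 * (X 1 1 - X 0 0)) / X 1 0.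
  pose y := (- (X 1 0 * (Y 0 0 - Y 1 1) + Y 1 0 * (X 1 1 - X 0 0))) / X 1 0.
  have := @bwd _ X Y x y (esym (divfK c0 _)) (esym (divfK c0 _)).
  move/(mulfI (mulf_neq0 c0 c0)) => ->.
  exists (y *: th + x *: 1).
  by rewrite (@normK_e _ _ hK _ thF _ _ hth).
Qed.
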